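(* Let $\mathbf A$ be a finite relational structure whose relations include three binary relations $\alpha^{\mathbf A},\beta^{\mathbf A},\gamma^{\mathbf A}$, and suppose: (a) there is a finite set $\mathcal P$ of pentagons such that for each $\mathbf P\in\mathcal P$ the domain $P$ is a subset of $A$ and $\alpha^{\mathbf P}=\alpha^{\mathbf A}\cap P^2$, $\beta^{\mathbf P}=\beta^{\mathbf A}\cap P^2$, $\gamma^{\mathbf P}=\gamma^{\mathbf A}\cap P^2$; (b) for every $k\ge1$ there is a relation $D_k\subseteq A^k$, primitive-positive definable over $\mathbf A$, such that $(a_1,\dots,a_k)\in D_k$ iff some $\mathbf P\in\mathcal P$ has all of $a_1,\dots,a_k$ in its domain. Let $\mathbf P\in\mathcal P$ be such that $\mathbb L(\mathbf P)$ is non-trivial and the domain of $\mathbf P$ is not contained in the domain of any other pentagon in $\mathcal P$. Then there is a linear reduction from $\mathsf{Pent\text{-}Eval}(\mathbf P)$ to $\exists\mathrm{CSP}(\mathbf A)$.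
   Context: For a set $X$, $\mathrm{Eq}(X)$ is the lattice of equivalence relations on $X$, with bottom $0_X$ (equality) and top $1_X=X^2$. A pentagon is a finite structure $\mathbf P$ with domain $P$ and three equivalence relations $\alpha^{\mathbf P},\beta^{\mathbf P},\gamma^{\mathbf P}$ on $P$ with $\alpha^{\mathbf P}\le\beta^{\mathbf P}$, $\beta^{\mathbf P}\wedge\gamma^{\mathbf P}=0_P$, $\beta^{\mathbf P}\circ\gamma^{\mathbf P}=1_P$, $\alpha^{\mathbf P}\vee\gamma^{\mathbf P}=1_P$ in $\mathrm{Eq}(P)$. Then $P=B_{\mathbf P}\times C_{\mathbf P}$ with $\beta^{\mathbf P},\gamma^{\mathbf P}$ the kernels of the projections onto $B_{\mathbf P}$, $C_{\mathbf P}$. For $b\in B_{\mathbf P}$, $\alpha^{\mathbf P}_b=\{(c,c')\in C_{\mathbf P}^2\mid ((b,c),(b,c'))\in\alpha^{\mathbf P}\}$; $\mathbb L(\mathbf P)$ is the sublattice of $\mathrm{Eq}(C_{\mathbf P})$ generated by all $\alpha^{\mathbf P}_b$; non-trivial means more than one element. $\mathbf P_2$ is the 2-sorted structure with sorts $B_{\mathbf P}$, $C_{\mathbf P}$ and ternary relation $R=\{(b,c,c')\mid (c,c')\in\alpha^{\mathbf P}_b\}$ (first argument of first sort, others of second sort). $\mathsf{Pent\text{-}Eval}(\mathbf P)$: instances are a primitive-positive formula $\phi(X,Y)$ over $\{R\}$ with free variables $X$ of first sort and $Y$ of second sort, and weights on $X\cup Y$ summing to 1; assignments map $X\to B_{\mathbf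 P}$, $Y\to C_{\mathbf P}$, satisfying iff $\phi$ holds in $\mathbf P_2$. $\exists\mathrm{CSP}(\mathbf A)$: instances $(V,V^\exists,\mathcal C,w)$ with constraints using relations of $\mathbf A$ on free variables $V$ and existential variables $V^\exists$, weights on $V$ summing to 1; $f:V\to A$ satisfying iff it extends to a satisfying assignment. $\mathrm{dist}_{\mathcal I}(f)$ is the minimum weight of free variables on which $f$ differs from a satisfying assignment. A linear reduction from $\mathcal P$ to $\mathcal P'$: given $(\mathcal I,f)$ with $\mathcal I$ on variable set $V$, it (possibly randomly) produces $(\mathcal I',f')$ with $|V'|=O(|V|)$ such that (i) $f$ satisfying implies $f'$ satisfying; (ii) for a constant $c_1>0$ and every $\epsilon\in(0,1)$, $\mathrm{dist}_{\mathcal I}(f)\ge\epsilon$ implies $\Pr[\mathrm{dist}_{\mathcal I'}(f')\ge c_1\epsilon]\ge 9/10$; (iii) each value of $f'$ is computable with $O(1)$ queries to $f$. *)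

(* Defs.v *)
From HB Require Import structures.
From mathcomp Require Import all_boot all_order all_algebra.
Set Implicit Arguments. Unset Strict Implicit. Unset Printing Implicit Defensive.
Import Order.TTheory GRing.Theory Num.Theory.

(* (encoded as sequences; only sequences of length [arity s] matter).  *)
Record relstr := RelStr {
  dom : finType;
  sym : finType;
  arity : sym -> nat;
  interp : sym -> seq dom -> bool }.

Definition brel (A : relstr) (s : sym A) : rel (dom A) :=
  fun x y => interp s [:: x; y].

(* Primitive-positive formulas over A: conjunctions of atoms; variables are
   natural numbers, 0..k-1 are the free variables, all others are
   existentially quantified. *)
Inductive ppatom (S : Type) := PPrel (s : S) (vs : seq nat) | PPeq (i j : nat).

Definition ppatom_wf (A : relstr) (a : ppatom (sym A)) : bool :=
  match a with PPrel s vs => size vs == arity s | PPeq _ _ => true end.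

Definition ppatom_holds (A : relstr) (e : nat -> dom A) (a : ppatom (sym A)) : bool :=
  match a with PPrel s vs => interp s (map e vs) | PPeq i j => e i == e j end.

Definition ppdefinable (A : relstr) (k : nat) (D : k.-tuple (dom A) -> bool) : Prop :=
  exists phi : seq (ppatom (sym A)),
    all (@ppatom_wf A) phi /\
    forall t : k.-tuple (dom A),
      D t <-> exists e : nat -> dom A,
                (forall i : 'I_k, e i = tnth t i) /\ all (ppatom_holds e) phi.

Section Pentagons.
Variable T : finType.

Definition equiv_on (P : {set T}) (e : rel T) : Prop :=
  [/\ (forall x, x \in P -> e x x),
      (forall x y, x \in P -> y \in P -> e x y -> e y x) &
      (forall x y z, x \in P -> y \in P -> z \in P -> e x y -> e y z -> e x z)].

Definition join_on (P : {set T}) (e1 e2 : rel T) : rel T :=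
  connect [rel x y | [&& x \in P, y \in P & e1 x y || e2 x y]].

Definition is_pentagon (a b g : rel T) (P : {set T}) : Prop :=
  [/\ equiv_on P a, equiv_on P b & equiv_on P g] /\
  [/\
      (forall x y, x \in P -> y \in P -> a x y -> b x y),
      (forall x y, x \in P -> y \in P -> b x y -> g x y -> x = y),
      (forall x y, x \in P -> y \in P -> exists2 z, z \in P & b x z && g z y) &
      (forall x y, x \in P -> y \in P -> join_on P a g x y)].

Definition classes (e : rel T) (P : {set T}) : {set {set T}} :=
  [set [set y in P | e x y] | x in P].

Definition pclass (e : rel T) (P : {set T}) := {X : {set T} | X \in classes e P}.

(* B_P := P/beta, C_P := P/gamma; the point (b,c) is the unique element of
   b /\ c.  pR a b c c'  <->  ((b,c),(b,c')) \in alpha, i.e. (c,c') \in alpha_b *)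
Definition pR (a bt g : rel T) (P : {set T})
    (b : pclass bt P) (c c' : pclass g P) : bool :=
  [exists x, [exists x', [&& x \in val b, x \in val c, x' \in val b,
                             x' \in val c' & a x x']]].

End Pentagons.

Definition eq_join (C : finType) (E1 E2 : {set C * C}) : {set C * C} :=
  [set p | connect [rel x y | ((x, y) \in E1) || ((x, y) \in E2)] p.1 p.2].

Inductive gen_lat (C : finType) (I : Type) (G : I -> {set C * C})
  : {set C * C} -> Prop :=
| gl_base i : gen_lat G (G i)
| gl_meet E1 E2 : gen_lat G E1 -> gen_lat G E2 -> gen_lat G (E1 :&: E2)
| gl_join E1 E2 : gen_lat G E1 -> gen_lat G E2 -> gen_lat G (eq_join E1 E2).

Definition L_nontrivial (T : finType) (a bt g : rel T) (P : {set T}) : Prop :=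
  let G := fun b : pclass bt P =>
             [set p : pclass g P * pclass g P | pR a b p.1 p.2] in
  exists E1 E2, [/\ gen_lat G E1, gen_lat G E2 & E1 <> E2].

Local Open Scope ring_scope.

Inductive patom (VB VC : Type) :=
| PR (x : VB) (y y' : VC)
| PEqB (x x' : VB)
| PEqC (y y' : VC).

(* free first-sort vars 'I_nX, free second-sort vars 'I_nY,
   existential ones 'I_mX, 'I_mY *)
Record pinst (R : Type) := PInst {
  nX : nat; nY : nat; mX : nat; mY : nat;
  patoms : seq (patom ('I_nX + 'I_mX) ('I_nY + 'I_mY));
  wX : 'I_nX -> R;
  wY : 'I_nY -> R }.
Arguments wX {R} _ _.
Arguments wY {R} _ _.

Definition sumval (V W D : Type) (f : V -> D) (g : W -> D) (v : V + W) : D :=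
  match v with inl i => f i | inr j => g j end.

Section PentEval.
Variables (R : realFieldType) (B C : finType) (Rl : B -> C -> C -> bool).

Definition patom_holds (VB VC : Type) (eB : VB -> B) (eC : VC -> C)
    (a : patom VB VC) : bool :=
  match a with
  | PR x y y' => Rl (eB x) (eC y) (eC y')
  | PEqB x x' => eB x == eB x'
  | PEqC y y' => eC y == eC y'
  end.

Definition pent_wf (I : pinst R) : Prop :=
  [/\ (forall i, 0 <= wX I i), (forall j, 0 <= wY I j) &
      \sum_i wX I i + \sum_j wY I j = 1].

Definition pent_sat (I : pinst R) (fX : 'I_(nX I) -> B) (fY : 'I_(nY I) -> C) : bool :=
  [exists gX : {ffun 'I_(mX I) -> B}, exists gY : {ffun 'I_(mY I) -> C},
     all (patom_holds (sumval fX gX) (sumval fY gY)) (patoms I)].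
Arguments pent_sat I fX fY : clear implicits.

Definition pent_diff (I : pinst R) (fX hX : 'I_(nX I) -> B) (fY hY : 'I_(nY I) -> C) : R :=
  \sum_(i | fX i != hX i) wX I i + \sum_(j | fY j != hY j) wY I j.
Arguments pent_diff I fX hX fY hY : clear implicits.

(* dist_I(f) >= eps, i.e. every satisfying assignment differs from f on
   weight at least eps (dist = +oo if none is satisfying) *)
Definition pent_dist_ge (I : pinst R) (fX : 'I_(nX I) -> B) (fY : 'I_(nY I) -> C)
    (eps : R) : bool :=
  [forall hX : {ffun 'I_(nX I) -> B}, forall hY : {ffun 'I_(nY I) -> C},
     pent_sat I hX hY ==> (eps <= pent_diff I fX hX fY hY)].
End PentEval.
Arguments pent_sat {R B C} Rl I fX fY.
Arguments pent_diff {R B C} I fX hX fY hY.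
Arguments pent_dist_ge {R B C} Rl I fX fY eps.

Record einst (R : Type) (A : relstr) := EInst {
  en : nat; em : nat;
  econs : seq (sym A * seq ('I_en + 'I_em));
  ew : 'I_en -> R }.
Arguments ew {R A} _ _.

Section ECSP.
Variables (R : realFieldType) (A : relstr).

Definition ecsp_wf (I : einst R A) : Prop :=
  [/\ all (fun c => size c.2 == arity c.1) (econs I),
      (forall i, 0 <= ew I i) & \sum_i ew I i = 1].

Definition ecsp_sat (I : einst R A) (f : 'I_(en I) -> dom A) : bool :=
  [exists g : {ffun 'I_(em I) -> dom A},
     all (fun c => interp c.1 (map (sumval f g) c.2)) (econs I)].
Arguments ecsp_sat I f : clear implicits.

Definition ecsp_diff (I : einst R A) (f h : 'I_(en I) -> dom A) : R :=
  \sum_(i | f i != h i) ew I i.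
Arguments ecsp_diff I f h : clear implicits.

Definition ecsp_dist_ge (I : einst R A) (f : 'I_(en I) -> dom A) (eps : R) : bool :=
  [forall h : {ffun 'I_(en I) -> dom A}, ecsp_sat I h ==> (eps <= ecsp_diff I f h)].
End ECSP.
Arguments ecsp_sat {R A} I f.
Arguments ecsp_diff {R A} I f h.
Arguments ecsp_dist_ge {R A} I f eps.

(* A (randomized) reduction maps each source instance I to a finite    *)
(* probability distribution over outcomes; an outcome is a target      *)
(* instance I' together with, for each free variable v' of I', a list  *)
(* of source variables queried and a function computing f'(v') from    *)
(* the queried values of f.                                            *)
Record routcome (R : Type) (A : relstr) (B C : Type) (I : pinst R) := ROut {
  rout : einst R A;
  rqry : 'I_(en rout) -> seq ('I_(nX I) + 'I_(nY I));
  rans : 'I_(en rout) -> seq (B + C) -> dom A }.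
Arguments rqry {R A B C I} _ _.
Arguments rans {R A B C I} _ _ _.

Definition fprime (R : Type) (A : relstr) (B C : Type) (I : pinst R)
    (o : routcome A B C I) (fX : 'I_(nX I) -> B) (fY : 'I_(nY I) -> C)
    : 'I_(en (rout o)) -> dom A :=
  fun v => rans o v (map (sumval (fun i => inl (fX i)) (fun j => inr (fY j))) (rqry o v)).
Arguments fprime {R A B C I} o fX fY _.

Definition seq_forall (X : Type) (P : X -> Prop) (s : seq X) : Prop :=
  foldr (fun x acc => P x /\ acc) True s.

Definition linear_reduction (R : realFieldType) (B C : finType)
    (Rl : B -> C -> C -> bool) (A : relstr) : Prop :=
  exists (K q : nat) (c1 : R), 0 < c1 /\
  exists red : forall I : pinst R, seq (R * routcome A B C I),
  forall I : pinst R, pent_wf I ->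
  [/\
      seq_forall (fun p => 0 <= p.1) (red I),
      \sum_(p <- red I) p.1 = 1,
      seq_forall (fun p => [/\ ecsp_wf (rout p.2),
                               (en (rout p.2) <= K * (nX I + nY I))%N &
                               forall v, (size (rqry p.2 v) <= q)%N]) (red I),
      (forall fX fY, pent_sat Rl I fX fY ->
         seq_forall (fun p => ecsp_sat (rout p.2) (fprime p.2 fX fY)) (red I)) &
      (forall (eps : R) fX fY, 0 < eps < 1 -> pent_dist_ge Rl I fX fY eps ->
         9 / 10 <= \sum_(p <- red I | ecsp_dist_ge (rout p.2) (fprime p.2 fX fY) (c1 * eps)) p.1)].

(* Main.v *)
Require Import Defs.
From Stdlib Require Import ClassicalEpsilon.
From HB Require Import structures.
From mathcomp Require Import all_boot all_order all_algebra.
From mathcomp Require Import zify lra.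
Import Order.TTheory GRing.Theory Num.Theory.
Set Implicit Arguments. Unset Strict Implicit. Unset Printing Implicit Defensive.

Lemma sum_enum_val (T : finType) (R: nmodType) (F : T -> R) :
  (\sum_(i < #|T|) F (enum_val i) = \sum_(x : T) F x)%R.
Proof. by rewrite [RHS](big_enum_val (A:=predT)). Qed.
Lemma sum_enum_val_cond (T : finType) (R: nmodType) (P : pred T) (F : T -> R) :
  (\sum_(i < #|T| | P (enum_val i)) F (enum_val i) = \sum_(x : T | P x) F x)%R.
Proof. by rewrite [RHS](big_enum_val_cond (A:=predT)). Qed.

Lemma all_impl (X : Type) (p q r : pred X) s :
  all p s -> all q s -> (forall x, p x -> q x -> r x) -> all r s.
Proof. elim: s => //= x s IH /andP[px ps] /andP[qx qs] H; rewrite H //; exact: IH. Qed.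

Section Cls.
Variables (T : finType) (e : rel T) (P : {set T}) (p0 : T).
Hypothesis He : equiv_on P e.
Hypothesis Hp0 : p0 \in P.

Lemma eq_refl' x : x \in P -> e x x.
Proof. by case: He => H _ _; apply: H. Qed.
Lemma eq_sym' x y : x \in P -> y \in P -> e x y -> e y x.
Proof. by case: He => _ H _; apply: H. Qed.
Lemma eq_trans' x y z : x \in P -> y \in P -> z \in P -> e x y -> e y z -> e x z.
Proof. by case: He => _ _ H; apply: H. Qed.

Lemma cls_in x : x \in P -> [set y in P | e x y] \in classes e P.
Proof. by move=> xP; apply/imsetP; exists x. Qed.

Definition d0 : pclass e P := exist (fun X => X \in classes e P) _ (cls_in Hp0).
Definition clsof (u : T) : pclass e P := insubd d0 [set y in P | e u y].
Definition rep (b : pclass e P) : T := odflt p0 [pick x in val b].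

Lemma val_clsof u : u \in P -> val (clsof u) = [set y in P | e u y].
Proof. by move=> uP; rewrite /clsof insubdK // cls_in. Qed.

Lemma pclassE (b : pclass e P) : exists2 x, x \in P & val b = [set y in P | e x y].
Proof. by case: b => /= X /imsetP[x xP ->]; exists x. Qed.

Lemma pclass_sub (b : pclass e P) u : u \in val b -> u \in P.
Proof. by case: (pclassE b) => x _ ->; rewrite inE => /andP[]. Qed.

Lemma pclass_rel (b : pclass e P) u v : u \in val b -> v \in val b -> e u v.
Proof.
case: (pclassE b) => x xP -> ; rewrite !inE => /andP[uP xu] /andP[vP xv].
exact: (eq_trans' uP xP vP (eq_sym' xP uP xu) xv).
Qed.

Lemma rep_in b : rep b \in val b.
Proof.
rewrite /rep; case: pickP => [x //|H] /=.
case: (pclassE b) => x xP E; move: (H x); rewrite E inE xP eq_refl' //.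
Qed.

Lemma rep_P b : rep b \in P.
Proof. exact: pclass_sub (rep_in b). Qed.

Lemma clsof_in (b : pclass e P) u : u \in val b -> clsof u = b.
Proof.
move=> ub; have uP := pclass_sub ub; apply: val_inj; rewrite val_clsof //.
case: (pclassE b) => x xP E; rewrite E; move: ub; rewrite E inE => /andP[_ xu].
apply/setP => y; rewrite !inE; case yP: (y \in P) => //=.
apply/idP/idP => H.
- exact: eq_trans' xP uP yP xu H.
- exact: eq_trans' uP xP yP (eq_sym' xP uP xu) H.
Qed.

Lemma clsof_rep b : clsof (rep b) = b.
Proof. exact: clsof_in (rep_in b). Qed.

Lemma in_clsof u : u \in P -> u \in val (clsof u).
Proof. by move=> uP; rewrite val_clsof // inE uP eq_refl'. Qed.

Lemma clsof_eq u v : u \in P -> v \in P -> e u v -> clsof u = clsof v.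
Proof.
move=> uP vP uv; symmetry; apply: clsof_in; rewrite val_clsof // inE vP //.
Qed.
End Cls.

Definition rho (i j x : nat) : nat := if x == maxn i j then minn i j else x.
Definition step (tau : nat -> nat) (p : nat * nat) : nat -> nat :=
  fun x => rho (tau p.1) (tau p.2) (tau x).
Definition tauL (L : seq (nat * nat)) := foldl step id L.

Definition Inv (tau : nat -> nat) := (forall x, tau (tau x) = tau x) /\ (forall x, tau x <= x).

Lemma rho_le i j x : rho i j x <= x.
Proof. rewrite /rho; case: eqP => // ->; lia. Qed.

Lemma step_Inv tau p : Inv tau -> Inv (step tau p).
Proof.
case=> Hi Hl; split => x; last by rewrite /step; apply: leq_trans (rho_le _ _ _) (Hl x).
rewrite /step; set a := tau p.1; set b := tau p.2.
have Ha : tau a = a by rewrite /a Hi.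
have Hb : tau b = b by rewrite /b Hi.
rewrite /rho; case: (eqVneq (tau x) (maxn a b)) => E.
- have -> : tau (minn a b) = minn a b by rewrite /minn; case: ifP.
  by case: eqP => // ->.
- by rewrite Hi (negbTE E).
Qed.

Lemma tauL_Inv L tau : Inv tau -> Inv (foldl step tau L).
Proof. elim: L tau => //= p L IH tau H; exact/IH/step_Inv. Qed.

Lemma tauL_mono L tau i j : tau i = tau j -> foldl step tau L i = foldl step tau L j.
Proof. elim: L tau => //= p L IH tau H; apply: IH; by rewrite /step H. Qed.

Lemma tauL_pairs L tau : all (fun p => foldl step tau L p.1 == foldl step tau L p.2) L.
Proof.
elim: L tau => //= p L IH tau; rewrite IH andbT; apply/eqP/tauL_mono.
rewrite /step /rho; set a := tau p.1; set b := tau p.2.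
case: (eqVneq a (maxn a b)) => Ea; case: (eqVneq b (maxn a b)) => Eb //.
- by move: Ea Eb; rewrite /maxn /minn; case: ltngtP.
- by move: Ea Eb; rewrite /maxn /minn; case: ltngtP.
- by move: Ea Eb; rewrite /maxn; case: ltngtP => _ /eqP; rewrite ?eqxx.
Qed.

Lemma tauL_sem (X : eqType) (e : nat -> X) L tau :
  (forall x, e (tau x) = e x) -> all (fun p => e p.1 == e p.2) L ->
  forall x, e (foldl step tau L x) = e x.
Proof.
elim: L tau => //= p L IH tau Ht /andP[/eqP Hp HL]; apply: IH => // x.
rewrite /step /rho; case: eqP => [E|_]; last exact: Ht.
transitivity (e (tau x)); last exact: Ht.
rewrite E; have Hab : e (tau p.1) = e (tau p.2) by rewrite !Ht.
rewrite /maxn /minn; case: ltngtP => //.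
Qed.
Local Open Scope ring_scope.
Section Abs.
Variables (R : realFieldType) (A : relstr) (VF VE : finType).
Variables (cons : seq (sym A * seq (VF + VE))) (wt : VF -> R).

Definition conv (v : VF + VE) : 'I_#|VF| + 'I_#|VE| :=
  sumval (fun x => inl (enum_rank x)) (fun y => inr (enum_rank y)) v.

Definition mkI : einst R A :=
  @EInst R A #|VF| #|VE| (map (fun c => (c.1, map conv c.2)) cons) (fun i => wt (enum_val i)).

Lemma sat_mk (f : 'I_#|VF| -> dom A) :
  ecsp_sat mkI f = [exists G : {ffun VE -> dom A},
     all (fun c => interp c.1 (map (sumval (fun x => f (enum_rank x)) G) c.2)) cons].
Proof.
apply/existsP/existsP => [[g Hg]|[G HG]].
- exists [ffun y => g (enum_rank y)]; move: Hg; rewrite /= all_map.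
  apply: sub_all => c /=; rewrite -map_comp.
  congr (interp _ _); apply: eq_map => -[x|y] //=; by rewrite ffunE.
- exists [ffun i => G (enum_val i)]; rewrite /= all_map; move: HG.
  apply: sub_all => c /=; rewrite -map_comp.
  congr (interp _ _); apply: eq_map => -[x|y] //=; by rewrite ffunE enum_rankK.
Qed.

Lemma diff_mk (f h : 'I_#|VF| -> dom A) :
  ecsp_diff mkI f h = \sum_(v : VF | f (enum_rank v) != h (enum_rank v)) wt v.
Proof.
rewrite -sum_enum_val_cond /ecsp_diff /=.
by apply: eq_bigl => i; rewrite enum_valK.
Qed.

Lemma sum_mk : \sum_i ew mkI i = \sum_(v : VF) wt v.
Proof. exact: (sum_enum_val wt). Qed.
End Abs.
Local Open Scope ring_scope.

Definition eqpairs (S : Type) (phi : seq (ppatom S)) : seq (nat * nat) :=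
  foldr (fun a acc => match a with PPeq i j => (i, j) :: acc | _ => acc end) [::] phi.

Definition vbound (S : Type) (phi : seq (ppatom S)) : nat :=
  foldr (fun a acc => match a with PPrel _ vs => maxn (\max_(v <- vs) v) acc | _ => acc end) 0%N phi.

Lemma vbound_ok (S : Type) (phi : seq (ppatom S)) m : (vbound phi <= m)%N ->
  all (fun a => match a with PPrel _ vs => all (fun v => v <= m)%N vs | _ => true end) phi.
Proof.
elim: phi => //= a phi IH; case: a => [s vs|i j] /=; last exact: IH.
rewrite geq_max => /andP[H1 H2]; rewrite IH // andbT.
apply/allP => v vin; apply: leq_trans H1; exact: (@leq_bigmax_seq _ vs xpredT (fun v => v) v vin).
Qed.

Lemma eqpairs_all (S : Type) (Y : eqType) (e : nat -> Y) (phi : seq (ppatom S)) :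
  all (fun p => e p.1 == e p.2) (eqpairs phi) =
  all (fun a => match a with PPeq i j => e i == e j | _ => true end) phi.
Proof. by elim: phi => //= a phi IH; case: a => [s vs|i j] /=; rewrite IH. Qed.

Lemma all_flatten_map (X Y : Type) (p : pred Y) (f : X -> seq Y) s :
  all p (flatten (map f s)) = all (fun a => all p (f a)) s.
Proof. by elim: s => //= a s IH; rewrite all_cat IH. Qed.

Section Main.
Variables (R : realFieldType) (A : relstr) (sa sb sg : sym A).
Hypotheses (Ha : arity sa = 2) (Hb : arity sb = 2) (Hg : arity sg = 2).
Variables (Pset : {set {set dom A}}) (P : {set dom A}).
Hypothesis HP : P \in Pset.
Hypothesis Hmax : forall Q, Q \in Pset -> Q != P -> ~~ (P \subset Q).
Hypotheses (Hsb : equiv_on P (brel sb)) (Hsg : equiv_on P (brel sg)).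
Variables (p1 p2 : dom A).
Hypotheses (Hp1 : p1 \in P) (Hp2 : p2 \in P) (Hp12 : p1 != p2).
Variable phiF : nat -> seq (ppatom (sym A)).
Hypothesis HphiF : forall k : nat, (0 < k)%N ->
  all (@ppatom_wf A) (phiF k) /\
  forall t : k.-tuple (dom A),
    [exists Q in Pset, all (fun x => x \in Q) t] <->
    exists e : nat -> dom A,
      (forall i : 'I_k, e i = tnth t i) /\ all (ppatom_holds e) (phiF k).

Notation B := (pclass (brel sb) P).
Notation C := (pclass (brel sg) P).
Definition Rl : B -> C -> C -> bool := pR (brel sa) (bt := brel sb) (g := brel sg) (P := P).

Definition clsB := clsof (brel sb) Hp1.
Definition clsC := clsof (brel sg) Hp1.
Definition repB (b : B) := rep p1 b.
Definition repC (c : C) := rep p1 c.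
Definition cst (x : dom A) := if x \in P then x else p1.

Lemma DP (k : nat) (t : k.-tuple (dom A)) :
  (forall i, tnth t i \in P) -> [exists Q in Pset, all (fun x => x \in Q) t].
Proof.
move=> H; apply/existsP; exists P; rewrite HP /=; apply/allP => x /tnthP[i ->]; exact: H.
Qed.

Section Inst.
Variable I : pinst R.

Definition VF : finType := (('I_(nX I) + 'I_(nY I)) + dom A)%type.
Definition VBt : finType := ('I_(nX I) + 'I_(mX I))%type.
Definition VCt : finType := ('I_(nY I) + 'I_(mY I))%type.
Definition VE1 : finType := (('I_(mX I) + 'I_(mY I)) + ((VBt * VCt * VCt) * bool))%type.
Definition VM : finType := (VF + VE1)%type.
Definition kk := #|VM|.
Definition Phi := phiF kk.
Definition tau := tauL (eqpairs Phi).
Definition Mb := vbound Phi.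
Definition VE : finType := (VE1 + 'I_Mb.+1)%type.
Definition V : finType := (VF + VE)%type.

Definition Xf i : V := inl (inl (inl i)).
Definition Yf j : V := inl (inl (inr j)).
Definition Cst x : V := inl (inr x).
Definition Xe i : V := inr (inl (inl (inl i))).
Definition Ye j : V := inr (inl (inl (inr j))).
Definition Zv t b : V := inr (inl (inr (t, b))).
Definition xv (x : VBt) : V := sumval Xf Xe x.
Definition yv (y : VCt) : V := sumval Yf Ye y.
Definition mvV (w : VM) : V := sumval inl (fun y => inr (inl y)) w.
Definition Gad g : V := inr (inr g).
Definition tr (j : nat) : V :=
  match @insub _ (fun x => x < kk)%N 'I_kk j with
  | Some i => mvV (enum_val i) | None => Gad (inord (j - kk)) end.
Definition trt j := tr (tau j).

Definition atomc (a : patom VBt VCt) : seq (sym A * seq V) :=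
  match a with
  | PR x y y' => [:: (sb, [:: xv x; Zv (x, y, y') false]);
                     (sg, [:: yv y; Zv (x, y, y') false]);
                     (sb, [:: xv x; Zv (x, y, y') true]);
                     (sg, [:: yv y'; Zv (x, y, y') true]);
                     (sa, [:: Zv (x, y, y') false; Zv (x, y, y') true])]
  | PEqB x x' => [:: (sb, [:: xv x; xv x'])]
  | PEqC y y' => [:: (sg, [:: yv y; yv y'])]
  end.

Definition mainc := flatten (map atomc (patoms I)).
Definition gadc : seq (sym A * seq V) :=
  foldr (fun a acc => match a with PPrel s vs => (s, map trt vs) :: acc | _ => acc end) [::] Phi.
Definition consV := mainc ++ gadc.

Definition w0 : R := (2 * (#|P|%:R))^-1.
Definition wt (v : VF) : R :=
  match v with
  | inl (inl i) => wX I i / 2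
  | inl (inr j) => wY I j / 2
  | inr x => if x \in P then w0 else 0 end.

Definition qry (v : VF) : seq ('I_(nX I) + 'I_(nY I)) :=
  match v with inl (inl i) => [:: inl i] | inl (inr j) => [:: inr j] | inr _ => [::] end.
Definition ans (v : VF) (s : seq (B + C)) : dom A :=
  match v with
  | inl (inl _) => match s with [:: inl b] => repB b | _ => p1 end
  | inl (inr _) => match s with [:: inr c] => repC c | _ => p1 end
  | inr x => cst x end.

Definition tinst := mkI consV wt.
Definition outc : routcome A B C I :=
  @ROut R A B C I tinst (fun v => qry (enum_val v)) (fun v => ans (enum_val v)).

Definition Fp (fX : 'I_(nX I) -> B) (fY : 'I_(nY I) -> C) (v : VF) : dom A :=
  match v with
  | inl (inl i) => repB (fX i)
  | inl (inr j) => repC (fY j)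
  | inr x => cst x end.

Lemma fprime_rank fX fY v : fprime outc fX fY (enum_rank v) = Fp fX fY v.
Proof. by rewrite /fprime /= enum_rankK; case: v => [[i|j]|x]. Qed.


Lemma tr_lt (i : 'I_kk) : tr i = mvV (enum_val i).
Proof. by rewrite /tr valK. Qed.

Lemma tr_ge j : (kk <= j)%N -> tr j = Gad (inord (j - kk)).
Proof. by move=> H; rewrite /tr insubN // -leqNgt. Qed.

Lemma kk_gt0 : (0 < kk)%N.
Proof. by apply/card_gt0P; exists (inl (inr p1)). Qed.

Definition tup (H : V -> dom A) : kk.-tuple (dom A) := [tuple H (mvV (enum_val i)) | i < kk].

Lemma phi_eqs (e : nat -> dom A) : all (ppatom_holds e) Phi ->
  all (fun p => e p.1 == e p.2) (eqpairs Phi).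
Proof.
move=> H; rewrite eqpairs_all; apply: sub_all H => -[s vs|i j] //=.
Qed.

Lemma tau_Inv : Inv tau.
Proof. apply: tauL_Inv; split => //. Qed.

Lemma tau_free (i : nat) : (i < kk)%N -> tau i = i.
Proof.
move=> ik; case: (eqVneq (tau i) i) => // Hne; exfalso.
have Hlt : (tau i < i)%N by rewrite ltn_neqAle Hne (proj2 tau_Inv).
pose t := [tuple if j == Ordinal ik then p2 else p1 | j < kk].
have [_ Hiff] := HphiF kk_gt0.
have : [exists Q in Pset, all (fun x => x \in Q) t].
  by apply: DP => j; rewrite tnth_mktuple; case: ifP.
case/Hiff => e [He Hall].
have := tauL_sem (e := e) (tau := id) (L := eqpairs Phi) (fun x => erefl) (phi_eqs Hall) i.
rewrite -/tau.
have tik : (tau i < kk)%N := ltn_trans Hlt ik.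
have -> : e (tau i) = tnth t (Ordinal tik) by rewrite -He.
rewrite (He (Ordinal ik)) !tnth_mktuple eqxx.
have -> : (Ordinal tik == Ordinal ik) = false.
  by apply/negbTE; apply/eqP => -[]; apply/eqP.
move=> E; move: Hp12; by rewrite E eqxx.
Qed.

Definition relp (H : V -> dom A) (a : ppatom (sym A)) : bool :=
  match a with PPrel s vs => interp s (map (H \o trt) vs) | _ => true end.

Lemma gadc_all H : all (fun c => interp c.1 (map H c.2)) gadc = all (relp H) Phi.
Proof. rewrite /gadc; elim: Phi => //= a phi IH; case: a => [s vs|i j] //=; by rewrite IH map_comp. Qed.

Lemma gad_sound (H : V -> dom A) :
  all (fun c => interp c.1 (map H c.2)) gadc -> [exists Q in Pset, all (fun x => x \in Q) (tup H)].
Proof.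
rewrite gadc_all => Hr; have [_ Hiff] := HphiF kk_gt0; apply/Hiff.
exists (fun j => H (trt j)); split.
- by move=> i; rewrite tnth_mktuple /trt tau_free // tr_lt.
- have Heq : all (fun a => match a with PPeq i j => H (trt i) == H (trt j) | _ => true end) Phi.
    rewrite -(eqpairs_all (fun j => H (trt j))).
    apply: sub_all (tauL_pairs (eqpairs Phi) id) => p /eqP E; by rewrite /trt /tau /tauL E.
  apply: all_impl Hr Heq _ => -[s vs|i j] //=.
Qed.

Lemma gad_complete (HF : VF -> dom A) (HE1 : VE1 -> dom A) :
  (forall w, sumval HF HE1 w \in P) ->
  exists Gg : 'I_Mb.+1 -> dom A,
    all (fun c => interp c.1 (map (sumval HF (sumval HE1 Gg)) c.2)) gadc.
Proof.
move=> Hin.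
set Hm := sumval HF HE1.
have [_ Hiff] := HphiF kk_gt0.
have Hmv : forall Gg w, sumval HF (sumval HE1 Gg) (mvV w) = Hm w by move=> Gg [].
have : [exists Q in Pset, all (fun x => x \in Q) [tuple Hm (enum_val i) | i < kk]].
  by apply: DP => i; rewrite tnth_mktuple.
case/Hiff => e [He Hall].
exists (fun g => e (kk + g)%N); rewrite gadc_all.
have Hbd := vbound_ok (m := Mb) (leqnn _) : all _ Phi.
apply: (all_impl Hbd Hall) => -[s vs|i j] //= Hvs Hi.
suff -> : map ((sumval HF (sumval HE1 (fun g : 'I_Mb.+1 => e (kk + g)%N))) \o trt) vs = map e vs by [].
apply/eq_in_map => v vin /=; have vM : (v <= Mb)%N by move/allP: Hvs; apply.
have Etau : e (tau v) = e v.
  exact: (tauL_sem (e := e) (tau := id) (L := eqpairs Phi) (fun x => erefl) (phi_eqs Hall) v).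
rewrite -Etau /trt; have tM : (tau v <= Mb)%N := leq_trans (proj2 tau_Inv v) vM.
case: (ltnP (tau v) kk) => Hk.
- by rewrite (tr_lt (Ordinal Hk)) Hmv (He (Ordinal Hk)) tnth_mktuple.
- rewrite tr_ge //= inordK; last by rewrite ltnS; apply: leq_trans (leq_subr _ _) tM.
  by rewrite subnKC.
Qed.

Definition condH (H : V -> dom A) (c : sym A * seq V) := interp c.1 (map H c.2).

Lemma main_sound (H : V -> dom A) : (forall w, H (mvV w) \in P) ->
  all (condH H) mainc ->
  pent_sat Rl I [ffun i => clsB (H (Xf i))] [ffun j => clsC (H (Yf j))].
Proof.
move=> Hm Hc.
apply/existsP; exists [ffun i => clsB (H (Xe i))]; apply/existsP; exists [ffun j => clsC (H (Ye j))].
have Hx : forall x, sumval [ffun i => clsB (H (Xf i))] [ffun i => clsB (H (Xe i))] x = clsB (H (xv x)).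
  by case=> i /=; rewrite ffunE.
have Hy : forall y, sumval [ffun j => clsC (H (Yf j))] [ffun j => clsC (H (Ye j))] y = clsC (H (yv y)).
  by case=> i /=; rewrite ffunE.
have Hxin : forall x, H (xv x) \in P.
  by case=> i; [exact: (Hm (inl (inl (inl i)))) | exact: (Hm (inr (inl (inl i))))].
have Hyin : forall y, H (yv y) \in P.
  by case=> i; [exact: (Hm (inl (inl (inr i)))) | exact: (Hm (inr (inl (inr i))))].
have Hzin : forall t b, H (Zv t b) \in P by move=> t b; exact: (Hm (inr (inr (t, b)))).
move: Hc; rewrite /mainc all_flatten_map; apply: sub_all => -[x y y'|x x'|y y'] /=.
- rewrite /condH /= => /and5P[c1 c2 c3 c4 /andP[c5 _]].
  rewrite Hx !Hy /Rl /pR.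
  apply/existsP; exists (H (Zv (x, y, y') false)); apply/existsP; exists (H (Zv (x, y, y') true)).
  rewrite /clsB /clsC !val_clsof // !inE !Hzin /=.
  by rewrite /brel c1 c2 c3 c4 c5.
- rewrite /condH /= andbT => c1; rewrite !Hx; apply/eqP.
  exact: (clsof_eq Hsb Hp1 (Hxin x) (Hxin x') c1).
- rewrite /condH /= andbT => c1; rewrite !Hy; apply/eqP.
  exact: (clsof_eq Hsg Hp1 (Hyin y) (Hyin y') c1).
Qed.

Section Compl.
Variables (fX : 'I_(nX I) -> B) (fY : 'I_(nY I) -> C).
Variables (gX : {ffun 'I_(mX I) -> B}) (gY : {ffun 'I_(mY I) -> C}).
Definition bx (x : VBt) : B := sumval fX gX x.
Definition cy (y : VCt) : C := sumval fY gY y.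
Definition zcond (x : VBt) (y y' : VCt) (p : dom A * dom A) :=
  [&& p.1 \in val (bx x), p.1 \in val (cy y), p.2 \in val (bx x), p.2 \in val (cy y') & brel sa p.1 p.2].
Definition zval (t : VBt * VCt * VCt) (b : bool) : dom A :=
  let: (x, y, y') := t in
  match [pick p | zcond x y y' p] with Some p => if b then p.2 else p.1 | None => p1 end.
Definition HE1 (v : VE1) : dom A :=
  match v with
  | inl (inl i) => repB (gX i)
  | inl (inr j) => repC (gY j)
  | inr tb => zval tb.1 tb.2 end.

Lemma compl_in w : sumval (Fp fX fY) HE1 w \in P.
Proof.
case: w => [[[i|j]|x]|[[i|j]|[t b]]] /=; try exact: rep_P.
- by rewrite /cst; case: ifP.
- case: t => [[x y] y'] /=; case: pickP => [p /and5P[h1 _ h3 _ _]|_] //.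
  by case: b; [exact: pclass_sub h3 | exact: pclass_sub h1].
Qed.

Lemma compl_main (Gg : 'I_Mb.+1 -> dom A) :
  all (patom_holds Rl (sumval fX gX) (sumval fY gY)) (patoms I) ->
  all (condH (sumval (Fp fX fY) (sumval HE1 Gg))) mainc.
Proof.
set H := sumval (Fp fX fY) (sumval HE1 Gg).
have Hx : forall x, H (xv x) = repB (bx x) by case.
have Hy : forall y, H (yv y) = repC (cy y) by case.
rewrite /mainc all_flatten_map; apply: sub_all => -[x y y'|x x'|y y'] /=.
- move=> Hr; rewrite /condH /= !Hx !Hy.
  have HZ : forall b, H (Zv (x, y, y') b) = zval (x, y, y') b by [].
  case: pickP => [[z z'] /and5P[h1 h2 h3 h4 h5]|Hn] /=.
  + rewrite /brel in h5; rewrite h5 /=.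
    move: (pclass_rel Hsb (rep_in p1 Hsb _) h1) (pclass_rel Hsg (rep_in p1 Hsg _) h2).
    move: (pclass_rel Hsb (rep_in p1 Hsb _) h3) (pclass_rel Hsg (rep_in p1 Hsg _) h4).
    by rewrite /brel /repB /repC /= => -> -> -> ->.
  + exfalso; move: Hr; rewrite /Rl /pR => /existsP[z /existsP[z' Hzz]].
    by move: (Hn (z, z')); rewrite /zcond /= Hzz.
- move=> /eqP E; rewrite /condH /= !Hx /bx E andbT.
  exact: (eq_refl' Hsb (rep_P p1 Hsb _)).
- move=> /eqP E; rewrite /condH /= !Hy /cy E andbT.
  exact: (eq_refl' Hsg (rep_P p1 Hsg _)).
Qed.
End Compl.

Lemma gadc_wf_gen (W : Type) (f : nat -> W) (phi : seq (ppatom (sym A))) :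
  all (@ppatom_wf A) phi ->
  all (fun c => size c.2 == arity c.1)
    (foldr (fun a acc => match a with PPrel s vs => (s, map f vs) :: acc | _ => acc end) [::] phi).
Proof.
elim: phi => //= a phi IH; case: a => [s vs|i j] /=; last exact: IH.
by move=> /andP[/eqP H1 H2]; rewrite size_map H1 eqxx IH.
Qed.

Lemma gadc_wf : all (fun c => size c.2 == arity c.1) gadc.
Proof. have [Hw _] := HphiF kk_gt0; exact: gadc_wf_gen Hw. Qed.

End Inst.

Lemma le_sum_sub (J : finType) (p q : pred J) (F : J -> R) :
  (forall i, 0 <= F i) -> (forall i, p i -> q i) -> \sum_(i | p i) F i <= \sum_(i | q i) F i.
Proof.
move=> H0 Hpq; rewrite big_mkcond [X in _ <= X]big_mkcond /=; apply: ler_sum => i _.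
case: ifP => pi; first by rewrite (Hpq _ pi).
by case: ifP.
Qed.

Lemma aux_le (a n : nat) : (0 < n)%N -> (n + a <= a.+1 * n)%N.
Proof. move=> H; nia. Qed.

Lemma w0_facts : [/\ 0 < w0, w0 * (2 * #|P|%:R) = 1 & 1 <= (#|P|%:R : R)].
Proof.
have NP : (0 < #|P|)%N by apply/card_gt0P; exists p1.
have N1 : 1 <= (#|P|%:R : R) by rewrite ler1n.
have Nz : (2 * #|P|%:R : R) != 0 by rewrite mulf_neq0 // pnatr_eq0 -lt0n.
split => //; last by rewrite /w0 mulVf.
by rewrite /w0 invr_gt0 mulr_gt0 // ltr0n.
Qed.

Lemma red_ok : linear_reduction R Rl A.
Proof.
have [w0p w0e N1] := w0_facts.
exists #|dom A|.+1, 1%N, w0; split; first exact: w0p.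
exists (fun I => [:: (1, outc I)]).
move=> I [HwX HwY Hws].
have Hwt : forall v : (('I_(nX I) + 'I_(nY I)) + dom A)%type, 0 <= wt (I:=I) v.
  move=> v; case: v => [[i|j]|x] /=; rewrite ?divr_ge0 //; case: ifP => // _; exact: ltW.
have Hext : forall H1 H2 : V I -> dom A, H1 =1 H2 ->
    all (condH H1) (consV I) = all (condH H2) (consV I).
  move=> H1 H2 E; apply: eq_all => c; rewrite /condH; congr (interp _ _); exact: eq_map.
split.
- by rewrite /seq_forall /=; split => //; exact: ler01.
- by rewrite big_cons big_nil addr0.
- rewrite /seq_forall /=; split; last by []; split.
  + split.
    * rewrite /tinst /mkI /= all_map.
      have : all (fun c => size c.2 == arity c.1) (consV I).
        rewrite all_cat gadc_wf andbT /mainc all_flatten_map.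
        elim: (patoms I) => //= a s ->; rewrite andbT.
        by case: a => [x y y'|x x'|y y'] /=; rewrite ?Ha ?Hb ?Hg.
      by apply: sub_all => c /=; rewrite size_map.
    * by move=> i; rewrite /tinst /mkI /=.
    * rewrite sum_mk !big_sumType /=.
      rewrite -!mulr_suml -big_mkcond /= sumr_const -mulr_natr.
      move: Hws w0e; lra.
  + rewrite /tinst /mkI /= !card_sum !card_ord.
    have : (0 < nX I + nY I)%N.
      rewrite lt0n; apply/negP => /eqP E; move: Hws.
      have [E1 E2] : nX I = 0%N /\ nY I = 0%N by lia.
      rewrite !big1 ?addr0 => [/eqP|j _|i _]; last 2 first.
      * by exfalso; have := ltn_ord j; lia.
      * by exfalso; have := ltn_ord i; lia.
      by rewrite eq_sym oner_eq0.
    move: (nX I + nY I)%N => n n0; exact: aux_le.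
  + by move=> v; rewrite /=; case: (enum_val v) => [[i|j]|x].
- move=> fX fY /existsP[gX /existsP[gY Hs]] /=; split => //.
  rewrite sat_mk; apply/existsP.
  have [Gg HGg] := gad_complete (HF := Fp fX fY) (HE1 := HE1 fX fY gX gY) (fun w => compl_in _ _ _ _ w).
  exists [ffun v => sumval (HE1 fX fY gX gY) Gg v].
  change (all (condH (sumval (fun x => fprime (outc I) fX fY (enum_rank x))
                              [ffun v => sumval (HE1 fX fY gX gY) Gg v])) (consV I)).
  rewrite (Hext _ (sumval (Fp fX fY) (sumval (HE1 fX fY gX gY) Gg))); last first.
    by move=> v; case: v => v; [exact: fprime_rank | exact: ffunE].
  rewrite /consV all_cat compl_main //=; exact: HGg.
- move=> eps fX fY /andP[e0 e1] Hd.
  suff Hcond : ecsp_dist_ge (tinst I) (fprime (outc I) fX fY) (w0 * eps).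
    rewrite big_cons big_nil.
    case: ifP => [_|/negP []]; last exact: Hcond.
    rewrite /= addr0; lra.
  apply/forallP => h; apply/implyP; rewrite sat_mk => /existsP[G HG].
  set H := sumval (fun x => h (enum_rank x)) G.
  have HG' : all (condH H) (consV I) by [].
  move: HG'; rewrite all_cat => /andP[Hmc Hgc].
  rewrite diff_mk.
  rewrite (eq_bigl (fun v => Fp fX fY v != H (inl v))); last by move=> v; rewrite fprime_rank.
  set d := \sum_(v | _) _.
  rewrite leNgt; apply/negP => Hlt.
  have d0 : 0 <= d by apply: sumr_ge0.
  have Hc : forall x, x \in P -> H (Cst I x) = x.
    move=> x xP; apply/eqP; apply/negPn/negP => Hne.
    have : w0 <= d.
      rewrite /d (bigD1 (inr x)) /=; last by rewrite /cst xP eq_sym.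
      rewrite xP ler_wpDr //; exact: sumr_ge0.
    move=> Hw; have : w0 * eps < w0 by rewrite gtr_pMr.
    move: Hlt Hw; lra.
  have Hmain : forall w, H (mvV w) \in P.
    have := gad_sound Hgc => /existsP[Q /andP[QP Hall]].
    have Hin : forall w, H (mvV w) \in Q.
      move=> w; move/allP: Hall; apply.
      have -> : H (mvV w) = tnth (tup H) (enum_rank w) by rewrite tnth_mktuple enum_rankK.
      exact: mem_tnth.
    have PQ : P \subset Q.
      by apply/subsetP => x xP; rewrite -(Hc x xP); exact: (Hin (inl (inr x))).
    have QeP : Q = P by case: (eqVneq Q P) => // /(Hmax QP); rewrite PQ.
    by move=> w; rewrite -QeP.
  have Hsat := main_sound Hmain Hmc.
  move/forallP: Hd => /(_ [ffun i => clsB (H (Xf i))]) /forallP /(_ [ffun j => clsC (H (Yf j))]).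
  move/implyP => /(_ Hsat); rewrite /pent_diff => Hle.
  move: Hlt; rewrite /d !big_sumType /= => Hlt.
  have DX : (\sum_(i | fX i != [ffun i => clsB (H (Xf i))] i) wX I i) / 2 <=
            \sum_(i | repB (fX i) != H (inl (inl (inl i)))) wX I i / 2.
    rewrite mulr_suml; apply: le_sum_sub => [i|i]; first by rewrite divr_ge0.
    rewrite ffunE; apply: contra => /eqP E; apply/eqP.
    by rewrite /Xf -E /clsB /repB clsof_rep.
  have DY : (\sum_(j | fY j != [ffun j => clsC (H (Yf j))] j) wY I j) / 2 <=
            \sum_(j | repC (fY j) != H (inl (inl (inr j)))) wY I j / 2.
    rewrite mulr_suml; apply: le_sum_sub => [i|i]; first by rewrite divr_ge0.
    rewrite ffunE; apply: contra => /eqP E; apply/eqP.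
    by rewrite /Yf -E /clsC /repC clsof_rep.
  have DC : 0 <= \sum_(x | cst x != H (inl (inr x))) (if x \in P then w0 else 0).
    by apply: sumr_ge0 => x _; case: ifP => // _; rewrite ltW.
  move: DX DY DC Hlt Hle; set SX := \sum_(i | _) wX I i; set SY := \sum_(j | _) wY I j.
  move=> DX DY DC Hlt Hle.
  nra.
Qed.
End Main.
Local Close Scope ring_scope.

Lemma two_pts (T : finType) (a b g : rel T) (P : {set T}) :
  is_pentagon a b g P -> L_nontrivial a b g P ->
  exists p1 p2, [/\ p1 \in P, p2 \in P & p1 != p2].
Proof.
move=> [[Ha Hb Hg] _] [E1 [E2 [G1 G2 NE]]].
case Hex: [exists p1, exists p2, [&& p1 \in P, p2 \in P & p1 != p2]].
  by move/existsP: Hex => [p1 /existsP[p2 /and3P[h1 h2 h3]]]; exists p1, p2.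
have Huniq : forall x y, x \in P -> y \in P -> x = y.
  move=> x y xP yP; apply/eqP; apply/negPn/negP => Hne.
  suff : [exists p1, exists p2, [&& p1 \in P, p2 \in P & p1 != p2]] by rewrite Hex.
  by apply/existsP; exists x; apply/existsP; exists y; rewrite xP yP.
suff Hall : forall E, gen_lat (fun bb : pclass b P =>
             [set p : pclass g P * pclass g P | pR a bb p.1 p.2]) E -> E = setT.
  by exfalso; apply: NE; rewrite (Hall _ G1) (Hall _ G2).
move=> E; elim => [bb|F1 F2 _ -> _ ->|F1 F2 _ -> _ ->].
- apply/setP => -[c c']; rewrite !inE /pR.
  have [x xP Eb] := pclassE bb.
  have xb : x \in val bb by rewrite Eb inE xP (eq_refl' Hb xP).
  have [y yP Ec] := pclassE c.
  have yc : y \in val c by rewrite Ec inE yP (eq_refl' Hg yP).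
  have [y' y'P Ec'] := pclassE c'.
  have yc' : y' \in val c' by rewrite Ec' inE y'P (eq_refl' Hg y'P).
  rewrite -(Huniq _ _ xP yP) in yc; rewrite -(Huniq _ _ xP y'P) in yc'.
  apply/existsP; exists x; apply/existsP; exists x.
  by rewrite xb yc yc' (eq_refl' Ha xP).
- by rewrite setIT.
- apply/setP => -[c c']; rewrite !inE /=; apply: connect1; by rewrite /= inE.
Qed.

Unset Implicit Arguments.
Theorem mainTheorem16 (R : realFieldType) (A : relstr)
    (sa sb sg : sym A)
    (Ha : arity sa = 2) (Hb : arity sb = 2) (Hg : arity sg = 2)
    (Pset : {set {set dom A}})
    (Hpent : forall P, P \in Pset -> is_pentagon (brel sa) (brel sb) (brel sg) P)
    (Hdef : forall k : nat, 0 < k ->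
       ppdefinable (k := k) (fun t => [exists Q in Pset, all (fun x => x \in Q) t]))
    (P : {set dom A}) (HP : P \in Pset)
    (HL : L_nontrivial (brel sa) (brel sb) (brel sg) P)
    (Hmax : forall Q, Q \in Pset -> Q != P -> ~~ (P \subset Q)) :
  linear_reduction R (pR (brel sa) (P := P) (bt := brel sb) (g := brel sg)) A.
Proof.
have Hpe := Hpent P HP.
have [p1 [p2 [Hp1 Hp2 Hp12]]] := two_pts Hpe HL.
have [[_ Hsb Hsg] _] := Hpe.
have Hch : forall k, exists phi : seq (ppatom (sym A)), (0 < k)%N ->
  all (@ppatom_wf A) phi /\
  forall t : k.-tuple (dom A),
    [exists Q in Pset, all (fun x => x \in Q) t] <->
    exists e : nat -> dom A,
      (forall i : 'I_k, e i = tnth t i) /\ all (ppatom_holds e) phi.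
  move=> k; case: (posnP k) => [->|kp]; first by exists [::].
  by have [phi Hphi] := Hdef k kp; exists phi.
pose phiF k := proj1_sig (constructive_indefinite_description _ (Hch k)).
have HphiF : forall k, (0 < k)%N -> _ := fun k => proj2_sig (constructive_indefinite_description _ (Hch k)).
exact: (red_ok R Ha Hb Hg HP Hmax Hsb Hsg Hp1 Hp2 Hp12 HphiF).
Qed.
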